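(* Let $X$ be a real Hausdorff locally convex topological vector space, let $f:X\to\overline{\mathbb R}$ be proper, convex and lower semicontinuous, and let $U\subseteq\operatorname{dom} f$ be self-segment-dense in $\operatorname{dom} f$. Assume further that $\operatorname{co}(U)$ is segment-dense in $\operatorname{dom} f$. Then $\overline{f_U}=\overline{f_{\operatorname{co}(U)}}=f$ on $X$ and $\inf_{x\in U}f(x)=\inf_{x\in X}f(x)$.
   Context: $\overline{\mathbb R}=\mathbb R\cup\{\pm\infty\}$; $\operatorname{dom} f=\{x:f(x)<+\infty\}$; proper: $\operatorname{dom} f\ne\emptyset$ and $f>-\infty$. $\operatorname{co}$ is the convex hull. For $W\subseteq\operatorname{dom} f$: $\operatorname{epi} f_W=\{(w,r)\in W\times\mathbb R:f(w)\le r\}$ and $\overline{f_W}$ is the function on $X$ whose epigraph is $\operatorname{cl}(\operatorname{epi} f_W)$ in $X\times\mathbb R$. $[x,y]=\{x+t(y-x):t\in[0,1]\}$. Self-segment-dense: for convex $V$ and $U\subseteq V$, $U$ is self-segment-dense in $V$ if $V\subseteq\operatorname{cl}U$ and for all $x,y\in U$, $[x,y]\cap U$ is dense in $[x,y]$. Segment-dense: for convex $V$ and $U\subseteq V$, $U$ is segment-dense in $V$ if for each $x\in V$ there is $y\in U$ such that $x$ is a cluster point of $[x,y]\cap U$. *)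

(* Defs.v *)
From Stdlib Require Import Reals ClassicalEpsilon.
Set Implicit Arguments.
Open Scope R_scope.

Inductive ereal := Fin (r : R) | PInf | NInf.

Definition ele (a b : ereal) : Prop :=
  match a, b with
  | NInf, _ => True
  | _, PInf => True
  | Fin x, Fin y => x <= y
  | _, _ => False
  end.

(** Greatest lower bound in the extended reals, and the infimum operator
    (which exists since the extended reals are complete). *)
Definition is_einf (S : ereal -> Prop) (v : ereal) : Prop :=
  (forall a, S a -> ele v a) /\
  (forall w, (forall a, S a -> ele w a) -> ele w v).

Definition Einf (S : ereal -> Prop) : ereal :=
  epsilon (inhabits PInf) (is_einf S).

Record LCS := {
  car :> Type;
  vzero : car;
  vadd : car -> car -> car;
  vopp : car -> car;
  vscal : R -> car -> car;
  vopen : (car -> Prop) -> Prop;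
  add_assoc : forall x y z, vadd x (vadd y z) = vadd (vadd x y) z;
  add_comm : forall x y, vadd x y = vadd y x;
  add_zero : forall x, vadd x vzero = x;
  add_opp : forall x, vadd x (vopp x) = vzero;
  scal_one : forall x, vscal 1 x = x;
  scal_assoc : forall a b x, vscal a (vscal b x) = vscal (a * b) x;
  scal_distr_v : forall a x y, vscal a (vadd x y) = vadd (vscal a x) (vscal a y);
  scal_distr_s : forall a b x, vscal (a + b) x = vadd (vscal a x) (vscal b x);
  open_full : vopen (fun _ => True);
  open_inter : forall A B, vopen A -> vopen B -> vopen (fun x => A x /\ B x);
  open_union : forall F : (car -> Prop) -> Prop,
      (forall A, F A -> vopen A) -> vopen (fun x => exists A, F A /\ A x);
  add_cont : forall x y W, vopen W -> W (vadd x y) ->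
      exists U V, vopen U /\ vopen V /\ U x /\ V y /\
        (forall u v, U u -> V v -> W (vadd u v));
  scal_cont : forall a x W, vopen W -> W (vscal a x) ->
      exists d V, 0 < d /\ vopen V /\ V x /\
        (forall b v, Rabs (b - a) < d -> V v -> W (vscal b v));
  hausdorff : forall x y, x <> y ->
      exists U V, vopen U /\ vopen V /\ U x /\ V y /\
        (forall z, U z -> V z -> False);
  locally_convex : forall W, vopen W -> W vzero ->
      exists V, vopen V /\ V vzero /\ (forall x, V x -> W x) /\
        (forall x y t, V x -> V y -> 0 <= t <= 1 ->
           V (vadd x (vscal t (vadd y (vopp x)))))
}.

Arguments vzero {l}.
Arguments vadd {l}.
Arguments vopp {l}.
Arguments vscal {l}.
Arguments vopen {l}.

Section Defs.
Context {X : LCS}.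

Definition seg (x y : X) (z : X) : Prop :=
  exists t, 0 <= t <= 1 /\ z = vadd x (vscal t (vadd y (vopp x))).

Definition convex_set (C : X -> Prop) : Prop :=
  forall x y z, C x -> C y -> seg x y z -> C z.

Definition co (A : X -> Prop) (x : X) : Prop :=
  forall C, convex_set C -> (forall y, A y -> C y) -> C x.

Definition closure (A : X -> Prop) (x : X) : Prop :=
  forall W, vopen W -> W x -> exists y, W y /\ A y.

Definition closed (A : X -> Prop) : Prop := vopen (fun x => ~ A x).

Definition cluster_point (A : X -> Prop) (x : X) : Prop :=
  forall W, vopen W -> W x -> exists y, W y /\ A y /\ y <> x.

Definition self_segment_dense (U V : X -> Prop) : Prop :=
  (forall x, U x -> V x) /\
  (forall x, V x -> closure U x) /\
  (forall x y, U x -> U y ->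
     forall z, seg x y z -> closure (fun w => seg x y w /\ U w) z).

Definition segment_dense (U V : X -> Prop) : Prop :=
  (forall x, U x -> V x) /\
  (forall x, V x -> exists y, U y /\
     cluster_point (fun w => seg x y w /\ U w) x).

Definition dom (f : X -> ereal) (x : X) : Prop := f x <> PInf.

Definition proper (f : X -> ereal) : Prop :=
  (exists x, dom f x) /\ (forall x, f x <> NInf).

(** convexity of f = convexity of its epigraph in X x R *)
Definition convex_fun (f : X -> ereal) : Prop :=
  forall x y r s t, ele (f x) (Fin r) -> ele (f y) (Fin s) -> 0 <= t <= 1 ->
    ele (f (vadd x (vscal t (vadd y (vopp x))))) (Fin (r + t * (s - r))).

Definition lsc (f : X -> ereal) : Prop :=
  forall r, closed (fun x => ele (f x) (Fin r)).

Definition epi_W (f : X -> ereal) (W : X -> Prop) (w : X) (r : R) : Prop :=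
  W w /\ ele (f w) (Fin r).

(** (x,r) lies in the closure of epi f_W in X x R (product topology) *)
Definition cl_epi_W (f : X -> ereal) (W : X -> Prop) (x : X) (r : R) : Prop :=
  forall N, vopen N -> N x -> forall eps, 0 < eps ->
    exists w s, N w /\ Rabs (s - r) < eps /\ epi_W f W w s.

(** overline{f_W}: the function whose epigraph is cl(epi f_W), i.e.
    x |-> inf {r | (x,r) in cl(epi f_W)} *)
Definition fbar (f : X -> ereal) (W : X -> Prop) (x : X) : ereal :=
  Einf (fun v => exists r, v = Fin r /\ cl_epi_W f W x r).

End Defs.

(* Main.v *)
Require Import Defs.
From Stdlib Require Import Reals Lra ClassicalEpsilon Classical FunctionalExtensionality PropExtensionality.
Open Scope R_scope.

Arguments add_assoc {l}. Arguments add_comm {l}. Arguments add_zero {l}.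
Arguments add_opp {l}. Arguments scal_one {l}. Arguments scal_assoc {l}.
Arguments scal_distr_v {l}. Arguments scal_distr_s {l}.
Section Alg.
Variable X : LCS.
Implicit Types x y z p q r s : X.

Lemma add0l x : vadd vzero x = x.
Proof. rewrite add_comm; apply add_zero. Qed.

Lemma add_cancel_l p q r : vadd p q = vadd p r -> q = r.
Proof.
  intro H. assert (H2 : vadd (vopp p) (vadd p q) = vadd (vopp p) (vadd p r)) by (rewrite H; reflexivity).
  rewrite !add_assoc, (add_comm (vopp p) p), add_opp, !add0l in H2. exact H2.
Qed.

Lemma scal0 x : vscal 0 x = vzero.
Proof.
  apply (add_cancel_l (vscal 0 x)). rewrite add_zero, <- scal_distr_s. f_equal; ring.
Qed.

Lemma scal_zero a : vscal a (@vzero X) = vzero.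
Proof.
  apply (add_cancel_l (vscal a vzero)). rewrite add_zero, <- scal_distr_v, add_zero. reflexivity.
Qed.

Lemma opp_scal x : vopp x = vscal (-1) x.
Proof.
  apply (add_cancel_l x). rewrite add_opp.
  transitivity (vadd (vscal 1 x) (vscal (-1) x)); [| now rewrite scal_one].
  rewrite <- scal_distr_s. replace (1 + -1) with 0 by ring. rewrite scal0. reflexivity.
Qed.

Lemma add4 p q r s : vadd (vadd p q) (vadd r s) = vadd (vadd p r) (vadd q s).
Proof.
  rewrite <- !add_assoc. f_equal. rewrite !add_assoc. f_equal. apply add_comm.
Qed.

Definition lin4 (x0 x1 x2 x3 : X) (a b c d : R) :=
  vadd (vscal a x0) (vadd (vscal b x1) (vadd (vscal c x2) (vscal d x3))).

Lemma lin4_add x0 x1 x2 x3 a b c d a' b' c' d' :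
  vadd (lin4 x0 x1 x2 x3 a b c d) (lin4 x0 x1 x2 x3 a' b' c' d') =
  lin4 x0 x1 x2 x3 (a+a') (b+b') (c+c') (d+d').
Proof.
  unfold lin4. rewrite (add4 (vscal a x0)), (add4 (vscal b x1)), (add4 (vscal c x2)), !scal_distr_s. reflexivity.
Qed.

Lemma lin4_scal x0 x1 x2 x3 k a b c d :
  vscal k (lin4 x0 x1 x2 x3 a b c d) = lin4 x0 x1 x2 x3 (k*a) (k*b) (k*c) (k*d).
Proof. unfold lin4. rewrite !scal_distr_v, !scal_assoc. reflexivity. Qed.

Lemma lin4_zero x0 x1 x2 x3 : lin4 x0 x1 x2 x3 0 0 0 0 = vzero.
Proof. unfold lin4. rewrite !scal0, !add_zero. reflexivity. Qed.

Inductive at4 := AT0 | AT1 | AT2 | AT3.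
Inductive vexp := VAt (a : at4) | VAdd (e1 e2 : vexp) | VOpp (e : vexp) | VSc (r : R) (e : vexp) | VZ.

Definition atv (x0 x1 x2 x3 : X) (a : at4) : X :=
  match a with AT0 => x0 | AT1 => x1 | AT2 => x2 | AT3 => x3 end.

Fixpoint veval (x0 x1 x2 x3 : X) (e : vexp) : X :=
  match e with
  | VAt a => atv x0 x1 x2 x3 a
  | VAdd e1 e2 => vadd (veval x0 x1 x2 x3 e1) (veval x0 x1 x2 x3 e2)
  | VOpp e => vopp (veval x0 x1 x2 x3 e)
  | VSc r e => vscal r (veval x0 x1 x2 x3 e)
  | VZ => vzero
  end.

Definition ateq (i j : at4) : R :=
  match i, j with AT0, AT0 | AT1, AT1 | AT2, AT2 | AT3, AT3 => 1 | _, _ => 0 end.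

Fixpoint vco (i : at4) (e : vexp) : R :=
  match e with
  | VAt a => ateq i a
  | VAdd e1 e2 => vco i e1 + vco i e2
  | VOpp e => - vco i e
  | VSc r e => r * vco i e
  | VZ => 0
  end.

Lemma vnormal x0 x1 x2 x3 e :
  veval x0 x1 x2 x3 e = lin4 x0 x1 x2 x3 (vco AT0 e) (vco AT1 e) (vco AT2 e) (vco AT3 e).
Proof.
  induction e; simpl.
  - unfold lin4; destruct a; simpl; rewrite ?scal0, ?scal_one, ?add_zero, ?add0l; reflexivity.
  - rewrite IHe1, IHe2, lin4_add. reflexivity.
  - rewrite IHe, opp_scal, lin4_scal. f_equal; ring.
  - rewrite IHe, lin4_scal. reflexivity.
  - symmetry. apply lin4_zero.
Qed.

Lemma veq x0 x1 x2 x3 e1 e2 :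
  (forall i, vco i e1 = vco i e2) -> veval x0 x1 x2 x3 e1 = veval x0 x1 x2 x3 e2.
Proof. intro H. rewrite !vnormal, !H. reflexivity. Qed.

End Alg.

Definition comb {X : LCS} (x y : X) (t : R) : X := vadd x (vscal t (vadd y (vopp x))).

Ltac vsolve X a b c d E1 E2 := exact (veq X a b c d E1 E2 ltac:(intros []; simpl; first [ring | field; lra | field; auto])).

Notation "'C' e1 e2 t" := (VAdd e1 (VSc t (VAdd e2 (VOpp e1)))) (at level 10, e1 at next level, e2 at next level, t at next level).
Notation "'V0'" := (VAt AT0). Notation "'V1'" := (VAt AT1). Notation "'V2'" := (VAt AT2). Notation "'V3'" := (VAt AT3).

Section Id.
Variable X : LCS.
Implicit Types x y z p q a b qa qb c e : X.

Lemma comb0 x y : comb x y 0 = x.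
Proof. vsolve X x y x x (C V0 V1 0) V0. Qed.
Lemma comb1 x y : comb x y 1 = y.
Proof. vsolve X x y x x (C V0 V1 1) V1. Qed.
Lemma comb_same x t : comb x x t = x.
Proof. vsolve X x x x x (C V0 V0 t) V0. Qed.
Lemma comb_I2 a b qa qb d s :
  comb (comb a qa d) (comb b qb d) s = comb (comb a b s) (comb qa qb s) d.
Proof. vsolve X a b qa qb (C (C V0 V2 d) (C V1 V3 d) s) (C (C V0 V1 s) (C V2 V3 s) d). Qed.
Lemma comb_I3 c p e d n k : k <> 0 -> k = d + n - n * d ->
  comb (comb c p d) e n = comb c (comb p e (n/k)) k.
Proof. intros Hk Hk2. subst k. vsolve X c p e e (C (C V0 V1 d) V2 n) (C V0 (C V1 V2 (n/(d+n-n*d))) (d+n-n*d)). Qed.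
Lemma comb_I4a x y s s2 : s <> 1 -> comb x y s2 = comb (comb x y s) y ((s2 - s)/(1-s)).
Proof. intro H. assert (1 - s <> 0) by lra. vsolve X x y x x (C V0 V1 s2) (C (C V0 V1 s) V1 ((s2-s)/(1-s))). Qed.
Lemma comb_I4b x y s s2 : s <> 0 -> comb x y s2 = comb (comb x y s) x ((s - s2)/s).
Proof. intro H. vsolve X x y x x (C V0 V1 s2) (C (C V0 V1 s) V0 ((s-s2)/s)). Qed.
Lemma comb_I5 c (r : X) k dl : dl <> 0 -> comb c r k = comb c (comb c r (k/dl)) dl.
Proof. intro H. vsolve X c r c c (C V0 V1 k) (C V0 (C V0 V1 (k/dl)) dl). Qed.
Lemma comb_lin x y s : comb x y s = vadd (vscal (1-s) x) (vscal s y).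
Proof. vsolve X x y x x (C V0 V1 s) (VAdd (VSc (1-s) V0) (VSc s V1)). Qed.
Lemma comb_diff x y s s2 : vadd (comb x y s2) (vopp (comb x y s)) = vscal (s2 - s) (vadd y (vopp x)).
Proof. vsolve X x y x x (VAdd (C V0 V1 s2) (VOpp (C V0 V1 s))) (VSc (s2-s) (VAdd V1 (VOpp V0))). Qed.
Lemma comb_I8 (d : X) k l : comb (@vzero X) (vscal k d) l = vscal (l * k) d.
Proof. vsolve X d d d d (C VZ (VSc k V0) l) (VSc (l*k) V0). Qed.
Lemma sub_self x : vadd x (vopp x) = vzero.
Proof. apply add_opp. Qed.
Lemma scal_inv x t : t <> 0 -> vscal (/t) (vscal t x) = x.
Proof. intro H. vsolve X x x x x (VSc (/t) (VSc t V0)) V0. Qed.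
Lemma scal_zero' (a : R) : vscal a (@vzero X) = vzero.
Proof. vsolve X (@vzero X) (@vzero X) (@vzero X) (@vzero X) (VSc a VZ) VZ. Qed.
Lemma sub_add x y : y = vadd (vadd y (vopp x)) x.
Proof. vsolve X x y x x V1 (VAdd (VAdd V1 (VOpp V0)) V0). Qed.
Lemma add0l' x : vadd vzero x = x.
Proof. vsolve X x x x x (VAdd VZ V0) V0. Qed.

Lemma scal_eq0 t x : t <> 0 -> vscal t x = vzero -> x = vzero.
Proof. intros H E. rewrite <- (scal_inv x t H), E. apply scal_zero'. Qed.

Lemma sub_neq0 x y : x <> y -> vadd y (vopp x) <> vzero.
Proof. intros H E. apply H. rewrite (sub_add x y), E, add0l'. reflexivity. Qed.

End Id.

Section Top.
Variable X : LCS.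

Lemma open_nbhd (P : X -> Prop) :
  (forall z, P z -> exists A, vopen A /\ A z /\ forall w, A w -> P w) -> vopen P.
Proof.
  intro H.
  assert (E : P = (fun x => exists A, (vopen A /\ forall w, A w -> P w) /\ A x)).
  { apply functional_extensionality; intro x; apply propositional_extensionality; split.
    - intro Px. destruct (H x Px) as (A & HA & Ax & HAP). exists A; tauto.
    - intros (A & (_ & HAP) & Ax). auto. }
  rewrite E. apply open_union. intros A [HA _]; exact HA.
Qed.

Lemma open_transl (V : X -> Prop) (c : X) : vopen V -> vopen (fun z => V (vadd z c)).
Proof.
  intro HV. apply open_nbhd. intros z Hz.
  destruct (add_cont X z c V HV Hz) as (A & B & HA & HB & Az & Bc & HAB).
  exists A; repeat split; auto.
Qed.

Lemma scal_cont_fixed (a : R) (x : X) (W : X -> Prop) : vopen W -> W (vscal a x) ->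
  exists V, vopen V /\ V x /\ forall v, V v -> W (vscal a v).
Proof.
  intros HW Hx. destruct (scal_cont X a x W HW Hx) as (d & V & Hd & HV & Vx & H).
  exists V; repeat split; auto. intros v Hv. apply H; auto. rewrite Rminus_diag, Rabs_R0; exact Hd.
Qed.

Lemma comb_cont (N : X -> Prop) (a b : X) (s : R) : vopen N -> N (comb a b s) ->
  exists Na Nb, vopen Na /\ vopen Nb /\ Na a /\ Nb b /\
    forall x y, Na x -> Nb y -> N (comb x y s).
Proof.
  intros HN Hab. rewrite comb_lin in Hab.
  destruct (add_cont X _ _ N HN Hab) as (A & B & HA & HB & Aa & Bb & HAB).
  destruct (scal_cont_fixed _ _ _ HA Aa) as (Va & HVa & Va_a & Ha).
  destruct (scal_cont_fixed _ _ _ HB Bb) as (Vb & HVb & Vb_b & Hb).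
  exists Va, Vb; repeat split; auto. intros x y Hx Hy. rewrite comb_lin. apply HAB; auto.
Qed.

Lemma param_control (x y : X) (s eta : R) : x <> y -> 0 < eta ->
  exists P, vopen P /\ P (comb x y s) /\
    forall s', P (comb x y s') -> Rabs (s' - s) < eta.
Proof.
  intros Hxy Heta.
  set (d := vadd y (vopp x)).
  assert (Hd : d <> vzero) by (apply sub_neq0; auto).
  assert (H1 : vzero <> vscal eta d).
  { intro E. apply Hd. apply (scal_eq0 X eta); auto; lra. }
  assert (H2 : vzero <> vscal (-eta) d).
  { intro E. apply Hd. apply (scal_eq0 X (-eta)); auto; lra. }
  destruct (hausdorff X H1) as (U1 & V1 & HU1 & HV1 & U1z & V1e & D1).
  destruct (hausdorff X H2) as (U2 & V2 & HU2 & HV2 & U2z & V2e & D2).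
  destruct (locally_convex X (fun z => U1 z /\ U2 z) (open_inter X _ _ HU1 HU2) (conj U1z U2z))
    as (V & HV & Vz & VW & Vconv).
  exists (fun z => V (vadd z (vopp (comb x y s)))). split; [|split].
  - apply open_transl; exact HV.
  - simpl. rewrite sub_self. exact Vz.
  - intros s' Hs'. simpl in Hs'. rewrite comb_diff in Hs'. fold d in Hs'.
    destruct (Rlt_or_le (Rabs (s' - s)) eta) as [Hl|Hge]; [exact Hl|exfalso].
    assert (Hpos : 0 < Rabs (s' - s)) by lra.
    set (l := eta / Rabs (s' - s)).
    assert (Hl : 0 <= l <= 1).
    { unfold l; split. apply Rlt_le, Rdiv_lt_0_compat; lra.
      apply (Rmult_le_reg_r (Rabs (s' - s))); auto. field_simplify; lra. }
    pose proof (Vconv vzero (vscal (s' - s) d) l Vz Hs' Hl) as Hc.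
    change (V (comb vzero (vscal (s' - s) d) l)) in Hc.
    rewrite comb_I8 in Hc. apply VW in Hc. destruct Hc as [Hc1 Hc2].
    assert (Hne : s' - s <> 0) by (intro E; rewrite E, Rabs_R0 in Hpos; lra).
    destruct (Rle_or_lt 0 (s' - s)) as [Hp|Hn].
    + replace (l * (s' - s)) with eta in Hc1 by (unfold l; rewrite Rabs_pos_eq by lra; field; exact Hne).
      exact (D1 _ Hc1 V1e).
    + replace (l * (s' - s)) with (-eta) in Hc2 by (unfold l; rewrite Rabs_left by lra; field; exact Hne).
      exact (D2 _ Hc2 V2e).
Qed.

End Top.

Lemma ele_trans a b c : ele a b -> ele b c -> ele a c.
Proof. destruct a, b, c; simpl; auto; try tauto; lra. Qed.

Lemma ele_antisym a b : ele a b -> ele b a -> a = b.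
Proof. destruct a, b; simpl; try tauto. intros; f_equal; lra. Qed.

Lemma ele_weaken a M M' : ele a (Fin M) -> M <= M' -> ele a (Fin M').
Proof. destruct a; simpl; auto; lra. Qed.

Lemma ele_approx w a : (forall e, 0 < e -> ele w (Fin (a + e))) -> ele w (Fin a).
Proof.
  intro H. destruct w; simpl.
  - destruct (Rle_or_lt r a) as [h|h]; auto. exfalso.
    specialize (H ((r - a)/2)). simpl in H. assert (0 < (r-a)/2) by lra. specialize (H H0). lra.
  - specialize (H 1 Rlt_0_1). simpl in H. exact H.
  - exact I.
Qed.

Lemma Einf_unique S v : is_einf S v -> Einf S = v.
Proof.
  intro H. unfold Einf.
  pose proof (epsilon_spec (inhabits PInf) (is_einf S) (ex_intro _ v H)) as H2.
  set (e := epsilon (inhabits PInf) (is_einf S)) in *.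
  destruct H as [H1a H1b]. destruct H2 as [H2a H2b].
  apply ele_antisym; [apply H1b; exact H2a | apply H2b; exact H1a].
Qed.

Section Main.
Variable X : LCS.
Variable f : X -> ereal.
Variable U : X -> Prop.
Hypothesis Hp : proper f.
Hypothesis Hc : convex_fun f.
Hypothesis Hl : lsc f.
Hypothesis HU : forall x, U x -> dom f x.
Hypothesis Hss : self_segment_dense U (dom f).
Hypothesis Hsd : segment_dense (co U) (dom f).

Lemma conv_sub M x y t : ele (f x) (Fin M) -> ele (f y) (Fin M) -> 0 <= t <= 1 ->
  ele (f (comb x y t)) (Fin M).
Proof.
  intros H1 H2 H3. pose proof (Hc x y M M t H1 H2 H3) as H.
  replace (M + t * (M - M)) with M in H by ring. exact H.
Qed.

Lemma fin_of_dom x : dom f x -> exists a, f x = Fin a.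
Proof.
  unfold dom; intro H. destruct Hp as [_ Hn]. specialize (Hn x).
  destruct (f x); [eauto | congruence | congruence].
Qed.

Definition Rad (w : X) : Prop := exists M, ele (f w) (Fin M) /\
  forall N, vopen N -> N w -> forall dl, 0 < dl <= 1 ->
    exists u q, U u /\ N u /\ ele (f q) (Fin M) /\ u = comb w q dl.

Lemma Rad_U u : U u -> Rad u.
Proof.
  intro Hu. destruct (fin_of_dom u (HU u Hu)) as [a Ha]. exists a. split.
  - rewrite Ha; simpl; lra.
  - intros N HN Nu dl Hdl. exists u, u. repeat split; auto.
    + rewrite Ha; simpl; lra.
    + rewrite comb_same; reflexivity.
Qed.

Lemma Rad_conv : convex_set Rad.
Proof.
  intros a b c [Ma [Fa Ha]] [Mb [Fb Hb]] [s [Hs Ec]].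
  change (c = comb a b s) in Ec. subst c.
  set (M := Rmax Ma Mb).
  assert (FaM : ele (f a) (Fin M)) by (apply (ele_weaken _ Ma); auto; apply Rmax_l).
  assert (FbM : ele (f b) (Fin M)) by (apply (ele_weaken _ Mb); auto; apply Rmax_r).
  assert (FcM : ele (f (comb a b s)) (Fin M)) by (apply conv_sub; auto).
  exists M. split; [exact FcM|].
  intros N HN Nc dl Hdl.
  set (d0 := dl / 2).
  assert (Hd0 : 0 < d0 <= 1/2) by (unfold d0; lra).
  destruct (comb_cont X N a b s HN Nc) as (Na & Nb & HNa & HNb & Naa & Nbb & Hcont).
  destruct (Ha Na HNa Naa d0 ltac:(lra)) as (ua & qa & Uua & Naua & Fqa & Eua).
  destruct (Hb Nb HNb Nbb d0 ltac:(lra)) as (ub & qb & Uub & Nbub & Fqb & Eub).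
  set (c' := comb ua ub s).
  assert (Nc' : N c') by (apply Hcont; auto).
  set (p := comb qa qb s).
  assert (Ec' : c' = comb (comb a b s) p d0) by (unfold c', p; rewrite Eua, Eub; apply comb_I2).
  assert (FqaM : ele (f qa) (Fin M)) by (apply (ele_weaken _ Ma); auto; apply Rmax_l).
  assert (FqbM : ele (f qb) (Fin M)) by (apply (ele_weaken _ Mb); auto; apply Rmax_r).
  assert (Fua : ele (f ua) (Fin M)) by (rewrite Eua; apply conv_sub; auto; lra).
  assert (Fub : ele (f ub) (Fin M)) by (rewrite Eub; apply conv_sub; auto; lra).
  assert (Fp : ele (f p) (Fin M)) by (apply conv_sub; auto).
  assert (Claim : exists c'' e nu, U c'' /\ N c'' /\ 0 <= nu <= d0 /\ ele (f e) (Fin M) /\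
                    c'' = comb c' e nu).
  { destruct (classic (s = 0 \/ s = 1 \/ ua = ub)) as [Hdeg|Hndeg].
    - exists c', ua, 0. repeat split; auto; try lra.
      + unfold c'. destruct Hdeg as [-> | [-> | ->]].
        * rewrite comb0; auto.
        * rewrite comb1; auto.
        * rewrite comb_same; auto.
      + rewrite comb0; reflexivity.
    - assert (Hs0 : s <> 0) by tauto. assert (Hs1 : s <> 1) by tauto.
      assert (Hne : ua <> ub) by tauto.
      set (eta := d0 * Rmin s (1 - s)).
      assert (Hmin : 0 < Rmin s (1 - s)) by (apply Rmin_glb_lt; lra).
      assert (Heta : 0 < eta) by (unfold eta; apply Rmult_lt_0_compat; lra).
      destruct (param_control X ua ub s eta Hne Heta) as (P & HP & Pc & HPc).
      destruct Hss as (_ & _ & Hseg).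
      assert (Hsegc : seg ua ub c') by (exists s; split; [lra | reflexivity]).
      destruct (Hseg ua ub Uua Uub c' Hsegc (fun z => N z /\ P z) (open_inter X _ _ HN HP) (conj Nc' Pc))
        as (w & [Nw Pw] & [t [Ht Ew]] & Uw).
      change (w = comb ua ub t) in Ew.
      assert (Hts : Rabs (t - s) < eta) by (apply HPc; rewrite <- Ew; exact Pw).
      assert (Hm1 : Rmin s (1 - s) <= s) by apply Rmin_l.
      assert (Hm2 : Rmin s (1 - s) <= 1 - s) by apply Rmin_r.
      destruct (Rle_or_lt s t) as [Hst|Hst].
      + exists w, ub, ((t - s)/(1 - s)). rewrite Rabs_pos_eq in Hts by lra.
        repeat split; auto.
        * apply Rle_mult_inv_pos; lra.
        * apply (Rmult_le_reg_r (1 - s)); [lra|]. field_simplify; [|lra].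
          unfold eta in Hts. nra.
        * rewrite Ew. apply comb_I4a; exact Hs1.
      + exists w, ua, ((s - t)/s). rewrite Rabs_left in Hts by lra.
        repeat split; auto.
        * apply Rle_mult_inv_pos; lra.
        * apply (Rmult_le_reg_r s); [lra|]. field_simplify; [|lra].
          unfold eta in Hts. nra.
        * rewrite Ew. apply comb_I4b; exact Hs0. }
  destruct Claim as (c'' & e & nu & Uc & Nc'' & Hnu & Fe & Ec'').
  set (k := d0 + nu - nu * d0).
  assert (Hk : 0 < k) by (unfold k; nra).
  assert (Hkd : k <= dl) by (unfold k, d0 in *; nra).
  assert (Hnuk : nu <= k) by (unfold k; nra).
  set (r := comb p e (nu / k)).
  assert (Hr : c'' = comb (comb a b s) r k).
  { rewrite Ec'', Ec'. apply comb_I3; [lra | reflexivity]. }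
  assert (Fr : ele (f r) (Fin M)).
  { apply conv_sub; auto. split. apply Rle_mult_inv_pos; lra.
    apply (Rmult_le_reg_r k); auto. field_simplify; lra. }
  exists c'', (comb (comb a b s) r (k / dl)). repeat split; auto.
  - apply conv_sub; auto. split. apply Rle_mult_inv_pos; lra.
    apply (Rmult_le_reg_r dl); [lra|]. field_simplify; lra.
  - rewrite Hr. apply comb_I5. lra.
Qed.

Lemma Rad_co z : co U z -> Rad z.
Proof. intro H. apply H. apply Rad_conv. apply Rad_U. Qed.

End Main.

Section Main2.
Variable X : LCS.
Variable f : X -> ereal.
Variable U : X -> Prop.
Hypothesis Hp : proper f.
Hypothesis Hc : convex_fun f.
Hypothesis Hl : lsc f.
Hypothesis HU : forall x, U x -> dom f x.
Hypothesis Hss : self_segment_dense U (dom f).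
Hypothesis Hsd : segment_dense (co U) (dom f).

Lemma L1 W x r : cl_epi_W f W x r -> ele (f x) (Fin r).
Proof.
  intro H. apply NNPP. intro Hn.
  assert (Heps : exists eps, 0 < eps /\ ~ ele (f x) (Fin (r + eps))).
  { destruct (f x) eqn:E; simpl in *.
    - exists ((r0 - r)/2). split; lra.
    - exists 1. split; [lra | tauto].
    - tauto. }
  destruct Heps as (eps & Heps & Hx).
  destruct (H _ (Hl (r + eps)) Hx eps Heps) as (w & s & Hw & Hs & _ & Hws).
  apply Hw. apply (ele_weaken _ s); auto.
  apply Rabs_def2 in Hs. lra.
Qed.

Lemma good z cz r N : co U z -> f z = Fin cz -> cz < r -> vopen N -> N z ->
  exists u, U u /\ N u /\ ele (f u) (Fin r).
Proof.
  intros Hz Ez Hr HN Nz.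
  destruct (Rad_co X f U Hp Hc HU Hss z Hz) as [M [FM HM]].
  rewrite Ez in FM. simpl in FM.
  set (dl := Rmin 1 ((r - cz) / (M - cz + 1))).
  assert (Hq : 0 < (r - cz) / (M - cz + 1)) by (apply Rdiv_lt_0_compat; lra).
  assert (Hdl : 0 < dl <= 1).
  { unfold dl; split; [apply Rmin_glb_lt; lra | apply Rmin_l]. }
  destruct (HM N HN Nz dl Hdl) as (u & q & Uu & Nu & Fq & Eu).
  exists u. repeat split; auto.
  pose proof (Hc z q cz M dl ltac:(rewrite Ez; simpl; lra) Fq ltac:(lra)) as H.
  change (ele (f (comb z q dl)) (Fin (cz + dl * (M - cz)))) in H.
  rewrite <- Eu in H. apply (ele_weaken _ _ _ H).
  assert (H1 : dl <= (r - cz) / (M - cz + 1)) by apply Rmin_r.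
  assert (H2 : dl * (M - cz + 1) <= r - cz).
  { apply (Rmult_le_compat_r (M - cz + 1)) in H1; [|lra].
    replace ((r - cz) / (M - cz + 1) * (M - cz + 1)) with (r - cz) in H1 by (field; lra). exact H1. }
  nra.
Qed.

Lemma L2 x a r : f x = Fin a -> a < r -> cl_epi_W f U x r.
Proof.
  intros Ex Har N HN Nx eps Heps.
  destruct Hsd as [Hsub Hcl].
  assert (Hdx : dom f x) by (unfold dom; rewrite Ex; discriminate).
  destruct (Hcl x Hdx) as (y & Hy & Hclu).
  assert (Hxy : x <> y).
  { intro E. subst y. destruct (Hclu (fun _ => True) (open_full X) I) as (z & _ & [[t [_ Ez]] _] & Hzx).
    change (z = comb x x t) in Ez. rewrite comb_same in Ez. auto. }
  destruct (fin_of_dom X f Hp y (Hsub y Hy)) as [b Eb].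
  set (eta := (r - a) / (2 * (Rabs (b - a) + 1))).
  assert (Habs := Rabs_pos (b - a)).
  assert (Heta : 0 < eta) by (unfold eta; apply Rdiv_lt_0_compat; lra).
  destruct (param_control X x y 0 eta Hxy Heta) as (P & HP & Px & HPc).
  rewrite comb0 in Px.
  destruct (Hclu (fun z => N z /\ P z) (open_inter X _ _ HN HP) (conj Nx Px))
    as (z & [Nz Pz] & [[t [Ht Ez]] Hcoz] & _).
  change (z = comb x y t) in Ez.
  assert (Htn : Rabs (t - 0) < eta) by (apply HPc; rewrite <- Ez; exact Pz).
  rewrite Rminus_0_r, Rabs_pos_eq in Htn by lra.
  pose proof (Hc x y a b t ltac:(rewrite Ex; simpl; lra) ltac:(rewrite Eb; simpl; lra) Ht) as Hfz.
  change (ele (f (comb x y t)) (Fin (a + t * (b - a)))) in Hfz.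
  rewrite <- Ez in Hfz.
  assert (Hbound : a + t * (b - a) <= (a + r) / 2).
  { assert (t * (b - a) <= t * Rabs (b - a)) by (apply Rmult_le_compat_l; [lra | apply Rle_abs]).
    assert (t * Rabs (b - a) <= eta * (Rabs (b - a) + 1)) by nra.
    assert (eta * (Rabs (b - a) + 1) = (r - a) / 2) by (unfold eta; field; lra).
    lra. }
  destruct (fin_of_dom X f Hp z) as [cz Ecz].
  { unfold dom. intro E. rewrite E in Hfz. exact Hfz. }
  rewrite Ecz in Hfz. simpl in Hfz.
  destruct (good z cz r N Hcoz Ecz ltac:(lra) HN Nz) as (u & Uu & Nu & Fu).
  exists u, r. repeat split; auto. rewrite Rminus_diag, Rabs_R0. exact Heps.
Qed.

Lemma fbar_eq W x : (forall r, cl_epi_W f W x r -> ele (f x) (Fin r)) ->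
  (forall a r, f x = Fin a -> a < r -> cl_epi_W f W x r) -> fbar f W x = f x.
Proof.
  intros HA HB. unfold fbar. apply Einf_unique.
  destruct (f x) eqn:E.
  - split.
    + intros v (r' & -> & H). apply HA in H. exact H.
    + intros w Hw. apply ele_approx. intros e He.
      apply Hw. exists (r + e). split; auto. apply (HB r); auto; lra.
  - split.
    + intros v (r & -> & H). apply HA in H. simpl in H. contradiction.
    + intros w _. destruct w; simpl; auto.
  - destruct Hp as [_ Hn]. exfalso; exact (Hn x E).
Qed.

Lemma U_sub_co x : U x -> co U x.
Proof. intros Hx C0 _ HC. auto. Qed.

Lemma cl_mono x r : cl_epi_W f U x r -> cl_epi_W f (co U) x r.
Proof.
  intros H N HN Nx eps Heps. destruct (H N HN Nx eps Heps) as (w & s & Nw & Hs & [Uw Fw]).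
  exists w, s. repeat split; auto. apply U_sub_co; auto.
Qed.

End Main2.

Theorem mainTheorem9 (X : LCS) (f : X -> ereal) (U : X -> Prop) :
  proper f -> convex_fun f -> lsc f ->
  (forall x, U x -> dom f x) ->
  self_segment_dense U (dom f) ->
  segment_dense (co U) (dom f) ->
  (forall x, fbar f U x = f x) /\
  (forall x, fbar f (co U) x = f x) /\
  Einf (fun v => exists x, U x /\ v = f x) = Einf (fun v => exists x, v = f x).
Proof.
  intros Hp Hc Hl HU Hss Hsd.
  split; [|split].
  - intro x. apply fbar_eq; auto.
    + intros r H. exact (L1 X f Hl U x r H).
    + intros a r Ea Har. exact (L2 X f U Hp Hc HU Hss Hsd x a r Ea Har).
  - intro x. apply fbar_eq; auto.
    + intros r H. exact (L1 X f Hl _ x r H).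
    + intros a r Ea Har. apply cl_mono. exact (L2 X f U Hp Hc HU Hss Hsd x a r Ea Har).
  - unfold Einf. f_equal. apply functional_extensionality; intro v.
    apply propositional_extensionality. unfold is_einf.
    split; intros [H1 H2]; split.
    + intros a (x & ->). destruct (f x) eqn:Ex.
      * apply ele_approx. intros e He.
        destruct (L2 X f U Hp Hc HU Hss Hsd x r (r + e/2) Ex ltac:(lra) (fun _ => True) (open_full X) I (e/2) ltac:(lra))
          as (w & s & _ & Hs & Uw & Fw).
        apply Rabs_def2 in Hs.
        apply (ele_trans _ (f w)). apply H1; eauto. apply (ele_weaken _ s); auto; lra.
      * destruct v; simpl; auto.
      * destruct Hp as [_ Hn]. exfalso; exact (Hn x Ex).
    + intros w Hw. apply H2. intros a (x & Ux & ->). apply Hw. eauto.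
    + intros a (x & Ux & ->). apply H1. eauto.
    + intros w Hw. apply H2. intros a (x & ->).
      destruct (f x) eqn:Ex.
      * apply ele_approx. intros e He.
        destruct (L2 X f U Hp Hc HU Hss Hsd x r (r + e/2) Ex ltac:(lra) (fun _ => True) (open_full X) I (e/2) ltac:(lra))
          as (w' & s & _ & Hs & Uw & Fw).
        apply Rabs_def2 in Hs.
        apply (ele_trans _ (f w')). apply Hw; eauto. apply (ele_weaken _ s); auto; lra.
      * destruct w; simpl; auto.
      * destruct Hp as [_ Hn]. exfalso; exact (Hn x Ex).
Qed.
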